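(* Let $n\ge 3$ and $k\ge 1$. Let $G=C_n$ be the cycle $g_1g_2\cdots g_ng_1$ and let $H=C_{3k+1}$ have vertex set $\{1,2,\dots,3k+1\}$ with $i$ adjacent to $i+1$ for $1\le i\le 3k$ and $3k+1$ adjacent to $1$. Define $f\colon V(G)\to V(H)$ by $f(g_i)=1$ if $i\bmod 4\in\{1,2\}$ and $f(g_i)=3$ otherwise ($i\in\{1,\dots,n\}$). Then \[ \gamma(G\otimes_f H)\le kn+\left\lceil \frac n4\right\rceil-\left\lfloor \frac n4\right\rfloor . \]
   Context: $\gamma$ denotes the domination number. For graphs $G,H$ and a function $f\colon V(G)\to V(H)$, the Sierpiński product $G\otimes_f H$ is the graph with vertex set $V(G)\times V(H)$ and edges of two types: (type 1) $(g,h)(g,h')$ for every $g\in V(G)$ and every edge $hh'\in E(H)$; (type 2) $(g,f(g'))(g',f(g))$ for every edge $gg'\in E(G)$. *)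

(* Defs.v *)
From mathcomp Require Import all_boot.
Set Implicit Arguments. Unset Strict Implicit. Unset Printing Implicit Defensive.

(* Graphs are given as (symmetric, irreflexive) relations on finite types. *)

Definition dominating (T : finType) (e : rel T) (D : {set T}) : bool :=
  [forall x, (x \in D) || [exists y in D, e y x]].

(* Domination number: minimum size of a dominating set
   (setT is always dominating, so the default #|T| does not distort the min). *)
Definition domination_number (T : finType) (e : rel T) : nat :=
  \big[minn/#|T|]_(D : {set T} | dominating e D) #|D|.

(* Cycle C_n on 'I_n: i adjacent to (i+1) mod n. Vertex i stands for g_(i+1). *)
Definition cycle_rel (n : nat) : rel 'I_n :=
  fun i j => (nat_of_ord j == i.+1 %% n) || (nat_of_ord i == j.+1 %% n).

Definition sierpinski_rel (TG TH : finType) (eG : rel TG) (eH : rel TH)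
  (f : TG -> TH) : rel (TG * TH) :=
  fun x y =>
    ((x.1 == y.1) && eH x.2 y.2)
    || [&& eG x.1 y.1, x.2 == f y.1 & y.2 == f x.1].

(* The function f of the statement: ordinal i : 'I_n is g_(i+1); H-vertex
   j : 'I_(3k+1) is vertex j+1, so H-vertex 1 is ordinal 0 and 3 is ordinal 2. *)
Definition f_map (n k : nat) (i : 'I_n) : 'I_(3 * k).+1 :=
  if (i.+1 %% 4 == 1) || (i.+1 %% 4 == 2) then inord 0 else inord 2.

(* Main.v *)
Require Import Defs.
From mathcomp Require Import all_boot zify.

Lemma bigmin_le_seq (I : eqType) (r : seq I) (P : pred I) (F : I -> nat) idx x :
  x \in r -> P x -> \big[minn/idx]_(i <- r | P i) F i <= F x.
Proof.
elim: r => [|y r IH] //; rewrite in_cons big_cons => /orP [/eqP -> | xr] Px.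
  by rewrite Px geq_minl.
case: (P y); last exact: IH.
exact: leq_trans (geq_minr _ _) (IH xr Px).
Qed.

Lemma dom_le (T : finType) (e : rel T) (D : {set T}) :
  dominating e D -> domination_number e <= #|D|.
Proof.
move=> HD; rewrite /domination_number.
exact: (@bigmin_le_seq _ _ (fun D => dominating e D) (fun D => #|D|) _ D (mem_index_enum _) HD).
Qed.

Lemma card_bigcup_le (T I : finType) (S : I -> {set T}) :
  #|\bigcup_(i : I) S i| <= \sum_(i : I) #|S i|.
Proof.
apply: (big_ind2 (fun (A : {set T}) s => #|A| <= s)) => //; first by rewrite cards0.
move=> A a B b HA HB; apply: leq_trans (leq_card_setU A B) _; exact: leq_add.
Qed.

Definition pos (k b t : nat) : nat :=
  if b + 2 + 3 * t == (3 * k).+1 then 0 else b + 2 + 3 * t.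

Lemma pos_lt k b t : (b == 0) || (b == 2) -> t < k -> pos k b t < (3 * k).+1.
Proof. rewrite /pos => Hb Ht; case: eqP => /= H; lia. Qed.

Lemma copy_dom k b j : 1 <= k -> (b == 0) || (b == 2) -> j < (3 * k).+1 -> j != b ->
  exists2 t, t < k & let p := pos k b t in
   p = j \/ j = p + 1 \/ p = j + 1 \/ (p = 3 * k /\ j = 0) \/ (j = 3 * k /\ p = 0).
Proof.
move=> Hk /orP [/eqP -> | /eqP ->] Hj Hjb.
  exists ((j - 1) %/ 3); first lia.
  rewrite /pos; case: eqP => /= H; lia.
case: (ltnP j 3) => Hj3.
  exists (k - 1); first lia.
  rewrite /pos; case: eqP => /= H; lia.
exists ((j - 3) %/ 3); first lia.
rewrite /pos; case: eqP => /= H; lia.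
Qed.
Definition fn (i : nat) : nat := if (i.+1 %% 4 == 1) || (i.+1 %% 4 == 2) then 0 else 2.
Lemma fn_shift i : fn i.+2 = 2 - fn i.
Proof. rewrite /fn; case: ifP; case: ifP; lia. Qed.
Lemma fn_cases i : (fn i == 0) || (fn i == 2).
Proof. by rewrite /fn; case: ifP. Qed.
Lemma fn_n n : n.+1 %% 4 == 0 -> fn n = 2 /\ fn n.-1 = 2.
Proof. move=> H; rewrite /fn; case: ifP; case: ifP; lia. Qed.

Lemma fmap_val n k (i : 'I_n) : 1 <= k -> val (@f_map n k i) = fn i.
Proof. move=> hk; rewrite /f_map /fn; case: ifP => _ /=; rewrite inordK //; lia. Qed.

Definition bb (n i : nat) : nat := if i.+1 < n then fn i.+1 else 2 - fn i.-1.

Lemma bb_cases n i : (bb n i == 0) || (bb n i == 2).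
Proof. rewrite /bb; case: ifP => _; have := fn_cases i.+1; have := fn_cases i.-1; lia. Qed.

Lemma cyc_adj m p j : 0 < m -> p < m -> j < m ->
  (j = p + 1 \/ p = j + 1 \/ (p = m.-1 /\ j = 0) \/ (j = m.-1 /\ p = 0)) ->
  (j == p.+1 %% m) || (p == j.+1 %% m).
Proof.
move=> hm hp hj [H|[H|[[H1 H2]|[H1 H2]]]].
- by rewrite modn_small ?H ?addn1 ?eqxx //; lia.
- by rewrite orbC modn_small ?H ?addn1 ?eqxx //; lia.
- have -> : p.+1 = m by lia. by rewrite modnn H2 eqxx.
- have -> : j.+1 = m by lia. by rewrite modnn H2 eqxx orbT.
Qed.

Theorem mainTheorem9 (n k : nat) (hn : 3 <= n) (hk : 1 <= k) :
  domination_number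
    (sierpinski_rel (@cycle_rel n) (@cycle_rel (3 * k).+1) (@f_map n k))
  <= k * n + (n + 3) %/ 4 - n %/ 4.
Proof.
case: n hn => [|n] // hn.
pose S (i : 'I_n.+1) : {set 'I_n.+1 * 'I_(3*k).+1} :=
  [set (i, inord (pos k (bb n.+1 i) t)) | t : 'I_k].
pose E : {set 'I_n.+1 * 'I_(3*k).+1} := if n.+1 %% 4 == 0 then set0
  else [set ((ord_max : 'I_n.+1), (inord (bb n.+1 n) : 'I_(3*k).+1))].
pose D := (\bigcup_i S i) :|: E.
have inD : forall (i : 'I_n.+1) t, t < k -> (i, inord (pos k (bb n.+1 i) t)) \in D.
  move=> i t ht; apply/setUP; left; apply/bigcupP; exists i => //.
  by apply/imsetP; exists (Ordinal ht).
have posv : forall (i : 'I_n.+1) t, t < k ->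
    val (inord (pos k (bb n.+1 i) t) : 'I_(3*k).+1) = pos k (bb n.+1 i) t.
  by move=> i t ht /=; rewrite inordK // pos_lt // bb_cases.
apply: leq_trans (@dom_le _ _ D _) _.
  apply/forallP => [[i j]] /=.
  case: (eqVneq (val j) (bb n.+1 i)) => Hj; last first.
    have [t ht Hp] := @copy_dom k (bb n.+1 i) j hk (bb_cases n.+1 i) (ltn_ord j) Hj.
    have pv := posv i t ht.
    move: Hp; set p := pos k _ _ => Hp.
    case: Hp => [Hp|Hp].
      apply/orP; left.
      have -> : j = inord (pos k (bb n.+1 i) t) by apply: val_inj; rewrite pv.
      exact: inD.
    apply/orP; right; apply/existsP; exists (i, inord (pos k (bb n.+1 i) t)).
    apply/andP; split; first exact: inD.
    rewrite /sierpinski_rel /= eqxx /=; apply/orP; left; rewrite /cycle_rel pv.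
    apply: cyc_adj; [by [] | by rewrite pos_lt // bb_cases | exact: ltn_ord | ].
    move: Hp; rewrite -/p; lia.
  case: (ltnP i.+1 n.+1) => Hi.
    pose i' := Ordinal Hi.
    apply/orP; right; apply/existsP; exists (i', @f_map n.+1 k i).
    apply/andP; split.
      have [t ht Ht] : exists2 t, t < k & pos k (bb n.+1 i') t = fn i.
        exists (if bb n.+1 i' == 0 then 0 else k - 1); first by case: ifP; lia.
        rewrite /= /bb; case: ifP => _; [rewrite fn_shift|];
          have := fn_cases i; case/orP => /eqP -> /=; rewrite /pos; case: eqP; lia.
      have -> : @f_map n.+1 k i = inord (pos k (bb n.+1 i') t).
        by apply: val_inj; rewrite posv // Ht fmap_val.
      exact: inD.
    rewrite /sierpinski_rel /=; apply/orP; right.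
    rewrite eqxx /=.
    apply/andP; split.
      by rewrite /cycle_rel /=; apply/orP; right; rewrite modn_small.
    by apply/eqP/val_inj; rewrite /= fmap_val //= Hj /bb Hi.
  have iv : val i = n.
    by apply/eqP; rewrite eqn_leq -ltnS ltn_ord -ltnS Hi.
  case: (eqVneq (n.+1 %% 4) 0) => H4; last first.
    apply/orP; left; apply/setUP; right; rewrite /E (negbTE H4).
    apply/set1P; congr (_, _); apply: val_inj => /=; first by rewrite iv.
    rewrite inordK; first by rewrite Hj iv.
    have := bb_cases n.+1 n; lia.
  have [Fn Fn1] := @fn_n n (introT eqP H4).
  apply/orP; right; apply/existsP; exists (ord0, @f_map n.+1 k i).
  apply/andP; split.
    have -> : @f_map n.+1 k i = inord (pos k (bb n.+1 (@ord0 n)) 0).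
      apply: val_inj; rewrite posv // fmap_val // iv Fn /= /bb.
      have -> : 1 < n.+1 by lia.
      by rewrite /fn /pos /=; case: eqP; lia.
    exact: inD.
  rewrite /sierpinski_rel /=; apply/orP; right; rewrite eqxx /=.
  apply/andP; split.
    by rewrite /cycle_rel /= iv; apply/orP; right; rewrite modnn.
  apply/eqP/val_inj; rewrite /= fmap_val //= Hj /bb iv ltnn Fn1.
  by rewrite /fn.
have cE : #|E| <= (if n.+1 %% 4 == 0 then 0 else 1).
  by rewrite /E; case: ifP => _; rewrite ?cards0 ?cards1.
have cS : forall i, #|S i| <= k.
  move=> i; apply: leq_trans (leq_imset_card _ _) _; by rewrite card_ord.
have cB : #|\bigcup_i S i| <= n.+1 * k.
  apply: leq_trans (@card_bigcup_le _ _ S) _.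
  apply: (@leq_trans (\sum_(i : 'I_n.+1) k)); first by apply: leq_sum => i _.
  by rewrite sum_nat_const card_ord.
apply: leq_trans (leq_card_setU _ _) _.
move: cE; case: ifP => h4 cE; lia.
Qed.
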